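(* Let $\mathcal G=(\mathcal V,\mathcal E,W)$ be a network, $h\in\mathbb{R}^{\mathcal V}$, and consider the SNC game with binary actions on $\mathcal G$ with external field $h$, with set of Nash equilibria $\mathcal N$. Let $\mathcal V=\mathcal R\cup\mathcal S$, $\mathcal R\cap\mathcal S=\emptyset$, be a binary partition such that $\mathcal G_{\mathcal R}$ is structurally balanced, and let $\tau\in\{\pm1\}^{\mathcal R}$ be such that $\mathcal G_{\mathcal R}^{[\tau]}$ is unsigned. Let $h^-,h^+\in\mathbb{R}^{\mathcal R}$ be given by $$h_i^+=\tau_ih_i+w_i^{\mathcal S},\qquad h_i^-=\tau_ih_i-w_i^{\mathcal S},\qquad i\in\mathcal R.$$ Assume that $\mathcal G_{\mathcal R}^{[\tau]}$ is $(h^-,h^+)$-indecomposable and that $$w_i^{\mathcal R}-|h_i|>w_i^{\mathcal S}\qquad\forall i\in\mathcal R.$$ Then: (i) if, for each $y\in\{\tau,-\tau\}$, the set $\mathcal N_{\mathcal S}^{(y)}$ is globally BR-reachable for the $\mathcal S$-restricted game with strategy profile of players in $\mathcal R$ frozen to $y$, then the set $\overline{\mathcal N}=\{x^*\in\mathcal N:\ x^*_{\mathcal R}\in\{\tau,-\tau\}\}$ is globally BR-reachable for the SNC game; (ii) if, for each $y\in\{\tau,-\tau\}$, there exists a nonempty subset $\bar{\mathcal N}_{\mathcal S}^{(y)}\subseteq\mathcal N_{\mathcal S}^{(y)}$ that is globally BR-stable for the $\mathcal S$-restricted game with strategy profile of players in $\mathcal R$ frozen to $y$, then there exists a globally BR-stable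 (for the SNC game) subset of Nash equilibria contained in $\overline{\mathcal N}$.
   Context: A network is a triple $\mathcal G=(\mathcal V,\mathcal E,W)$ where $\mathcal V$ is a finite nonempty set, $\mathcal E\subseteq\mathcal V\times\mathcal V$, and $W\in\mathbb{R}^{\mathcal V\times\mathcal V}$ has zero diagonal and satisfies $W_{ij}\neq0$ iff $(i,j)\in\mathcal E$ (weights may have either sign; $W$ need not be symmetric). It is unsigned if $W\ge0$ entrywise. For $\mathcal U\subseteq\mathcal V$, the subnetwork $\mathcal G_{\mathcal U}$ has node set $\mathcal U$, links $\mathcal E\cap(\mathcal U\times\mathcal U)$ and weight matrix $W_{\mathcal U\mathcal U}$. A network is structurally balanced if its node set can be written as a disjoint union $\mathcal V_1\cup\mathcal V_2$ with $W_{ij}\ge0$ whenever $i,j$ lie in the same part and $W_{ij}\le0$ whenever they lie in different parts. For $\sigma\in\{\pm1\}^{\mathcal U}$ and a network on node set $\mathcal U$ with weight matrix $M$, the $[\sigma]$-transformed network has the same nodes and links and weight matrix $[\sigma]M[\sigma]$, where $[\sigma]$ is the diagonal matrix with diagonal $\sigma$. For $i\in\mathcal V$ and $\mathcal B\subseteq\mathcal V$, $w_i^{\mathcal B}=\sum_{j\in\mathcal B}|W_{ij}|$ (these quantities are unchanged by $[\sigma]$-transformations). Indecomposability: a network $(\mathcal U,\mathcal E',M)$ with $h^-\le h^+$ in $\mathbb{R}^{\mathcal U}$ is $(h^-,h^+)$-indecomposable if for every partition $\mathcal U=\mathcal U^-\cup\mathcal U^+$ into two disjoint nonempty sets there is a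 node $i$ with either $i\in\mathcal U^+$ and $w_i^{\mathcal U^+}+h_i^+<w_i^{\mathcal U^-}$, or $i\in\mathcal U^-$ and $w_i^{\mathcal U^-}-h_i^-<w_i^{\mathcal U^+}$ (degrees computed with $|M|$). The SNC game with binary actions on $\mathcal G$ with external field $h\in\mathbb{R}^{\mathcal V}$ has player set $\mathcal V$, action set $\{-1,+1\}$ for each player, strategy profiles $\mathcal X=\{\pm1\}^{\mathcal V}$, and utilities $u_i(x)=h_ix_i+x_i\sum_{j\in\mathcal V}W_{ij}x_j$. Best responses $\mathcal B_i(x_{-i})=\arg\max_{x_i\in\{\pm1\}}u_i(x_i,x_{-i})$; Nash equilibrium: $x^*_i\in\mathcal B_i(x^*_{-i})$ for all $i$. For $y\in\{\pm1\}^{\mathcal R}$, the $\mathcal S$-restricted game with strategy profile of players in $\mathcal R$ frozen to $y$ has player set $\mathcal S$, actions $\{\pm1\}$, and utilities $u_i^{(y)}(z)=u_i(y,z)$ for $i\in\mathcal S$, $z\in\{\pm1\}^{\mathcal S}$; $\mathcal N_{\mathcal S}^{(y)}$ is its set of Nash equilibria. BR-dynamics notions, for any game with binary actions and profile set $\mathcal Y$: a BR-path of length $l\ge0$ from $x$ to $y$ is a sequence $x^{(0)}=x,x^{(1)},\dots,x^{(l)}=y$ such that for each $k$ there is a player $i_k$ with $x^{(k)}_{-i_k}=x^{(k-1)}_{-i_k}$ and $x^{(k)}_{i_k}\in\mathcal B_{i_k}(x^{(k-1)}_{-i_k})\setminus\{x^{(k-1)}_{i_k}\}$. A set $\mathcal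 Y^*\subseteq\mathcal Y$ is globally BR-reachable if from every profile there is a BR-path to some element of $\mathcal Y^*$; BR-invariant if there is no BR-path from an element of $\mathcal Y^*$ to an element outside $\mathcal Y^*$; globally BR-stable if it is both. *)

(* Defs.v *)
From HB Require Import structures.
From mathcomp Require Import all_boot all_order all_algebra.
Set Implicit Arguments. Unset Strict Implicit. Unset Printing Implicit Defensive.
Import Order.TTheory GRing.Theory Num.Theory.
Local Open Scope ring_scope.

Definition sgn {R : pzRingType} (b : bool) : R := if b then 1 else -1.

Section BinaryGames.
Variables (R : realFieldType) (I : finType).
Variable u : I -> {ffun I -> bool} -> R.

Definition upd (x : {ffun I -> bool}) (i : I) (b : bool) : {ffun I -> bool} :=
  [ffun j => if j == i then b else x j].

Definition is_BR (i : I) (x : {ffun I -> bool}) (b : bool) : bool :=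
  [forall b' : bool, u i (upd x i b') <= u i (upd x i b)].

(* one BR step: a single player i switches to a best response different from
   its current action (with binary actions, this is the flipped action) *)
Definition BRstep : rel {ffun I -> bool} :=
  fun x y => [exists i : I, is_BR i x (~~ x i) && (y == upd x i (~~ x i))].

Definition BRpath (x y : {ffun I -> bool}) : Prop :=
  exists s : seq {ffun I -> bool}, path BRstep x s /\ last x s = y.

Definition Nash (x : {ffun I -> bool}) : Prop := forall i, is_BR i x (x i).

Definition BR_reachable (A : {ffun I -> bool} -> Prop) : Prop :=
  forall x, exists y, A y /\ BRpath x y.
Definition BR_invariant (A : {ffun I -> bool} -> Prop) : Prop :=
  forall x y, A x -> BRpath x y -> A y.
Definition BR_stable (A : {ffun I -> bool} -> Prop) : Prop :=
  BR_reachable A /\ BR_invariant A.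
End BinaryGames.

Section Networks.
Variables (R : realFieldType) (V : finType).

(* a network is given by its weight matrix W (links = nonzero entries) *)
Definition network (W : V -> V -> R) : Prop :=
  (0 < #|V|)%N /\ forall i, W i i = 0.

Definition wdeg (W : V -> V -> R) (i : V) (B : {set V}) : R :=
  \sum_(j in B) `|W i j|.

Definition struct_balanced (U : {set V}) (W : V -> V -> R) : Prop :=
  exists V1 : {set V}, V1 \subset U /\
    forall i j, i \in U -> j \in U ->
      ((i \in V1) = (j \in V1) -> 0 <= W i j) /\
      ((i \in V1) != (j \in V1) -> W i j <= 0).

Definition transf (sigma : V -> bool) (M : V -> V -> R) : V -> V -> R :=
  fun i j => sgn (sigma i) * M i j * sgn (sigma j).

Definition unsigned_on (U : {set V}) (M : V -> V -> R) : Prop :=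
  forall i j, i \in U -> j \in U -> 0 <= M i j.

Definition indecomposable (U : {set V}) (M : V -> V -> R) (hm hp : V -> R)
  : Prop :=
  (forall i, i \in U -> hm i <= hp i) /\
  forall Up Um : {set V},
    Up :|: Um = U -> [disjoint Up & Um] -> Up != set0 -> Um != set0 ->
    exists i,
      (i \in Up /\ wdeg M i Up + hp i < wdeg M i Um) \/
      (i \in Um /\ wdeg M i Um - hm i < wdeg M i Up).

Definition snc_u (W : V -> V -> R) (h : V -> R) (i : V) (x : {ffun V -> bool})
  : R := h i * sgn (x i) + sgn (x i) * \sum_j W i j * sgn (x j).

Definition Spl (Rs : {set V}) := {i : V | i \in ~: Rs}.

Definition combine (Rs : {set V}) (y : {ffun V -> bool})
  (z : {ffun Spl Rs -> bool}) : {ffun V -> bool} :=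
  [ffun i => match @insub V (fun k => k \in ~: Rs) (Spl Rs) i with
             | Some j => z j | None => y i end].

Definition restr_u (W : V -> V -> R) (h : V -> R) (Rs : {set V})
  (y : {ffun V -> bool}) (j : Spl Rs) (z : {ffun Spl Rs -> bool}) : R :=
  snc_u W h (val j) (combine y z).

Definition Nbar (W : V -> V -> R) (h : V -> R) (Rs : {set V})
  (tau : {ffun V -> bool}) (x : {ffun V -> bool}) : Prop :=
  Nash (snc_u W h) x /\
  ((forall i, i \in Rs -> x i = tau i) \/ (forall i, i \in Rs -> x i = ~~ tau i)).
End Networks.
Arguments restr_u {R V} W h Rs y j z.

(* Main.v *)
Require Import Defs.
From HB Require Import structures.
From mathcomp Require Import all_boot all_order all_algebra.
From mathcomp Require Import ring lra.
Set Implicit Arguments. Unset Strict Implicit. Unset Printing Implicit Defensive.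
Import Order.TTheory GRing.Theory Num.Theory.
Local Open Scope ring_scope.

Lemma BRpath_refl (R : realFieldType) (I : finType) (u : I -> {ffun I -> bool} -> R) x :
  BRpath u x x.
Proof. by exists [::]. Qed.

Lemma BRpath_cons (R : realFieldType) (I : finType) (u : I -> {ffun I -> bool} -> R) x y z :
  BRstep u x y -> BRpath u y z -> BRpath u x z.
Proof. by move=> Hs [s [Hp Hl]]; exists (y :: s); rewrite /= Hs Hp. Qed.

Lemma BRpath_trans (R : realFieldType) (I : finType) (u : I -> {ffun I -> bool} -> R) x y z :
  BRpath u x y -> BRpath u y z -> BRpath u x z.
Proof.
by move=> [s [Hp <-]] [t [Ht <-]]; exists (s ++ t); rewrite cat_path last_cat Hp Ht.
Qed.

Section S.
Variables (R : realFieldType) (V : finType) (W : V -> V -> R) (h : V -> R).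
Hypothesis W0 : forall i, W i i = 0.

Lemma sgnN (b : bool) : sgn (~~ b) = - sgn b :> R.
Proof. by case: b => /=; rewrite ?opprK. Qed.
Lemma sgn_norm (b : bool) : `|sgn b : R| = 1.
Proof. by case: b; rewrite /= ?normrN normr1. Qed.
Lemma sgn_sq (b : bool) : sgn b * sgn b = 1 :> R.
Proof. by case: b; rewrite /= ?mulrNN mulr1. Qed.

Definition F (x : {ffun V -> bool}) i := h i + \sum_j W i j * sgn (x j).

Lemma F_upd x i b k : F (upd x i b) k = F x k + W k i * (sgn b - sgn (x i)).
Proof.
rewrite /F -addrA; congr (_ + _).
rewrite (bigD1 i) //= [in RHS](bigD1 i) //= ffunE eqxx.
rewrite addrAC mulrBr addrCA subrr addr0; congr (_ + _).
by apply: eq_bigr => j /negbTE Hj; rewrite ffunE Hj.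
Qed.

Lemma F_upd_self x i b : F (upd x i b) i = F x i.
Proof. by rewrite F_upd W0 mul0r addr0. Qed.

Lemma snc_F x i : snc_u W h i x = sgn (x i) * F x i.
Proof. by rewrite /snc_u /F mulrDr mulrC. Qed.

Lemma is_BR_F x i b : is_BR (snc_u W h) i x b = (0 <= sgn b * F x i).
Proof.
apply/forallP/idP => [H|H b'].
  have := H (~~ b); rewrite !snc_F !ffunE eqxx !F_upd_self.
  by case: b H => /= _; lra.
rewrite !snc_F !ffunE eqxx !F_upd_self.
by case: b b' H => [] [] /=; lra.
Qed.

Variables (Rs : {set V}) (tau : {ffun V -> bool}).
Hypothesis Hu : unsigned_on Rs (transf tau W).
Local Notation M := (transf tau W).

Definition a x i := sgn (tau i) * F x i.

Lemma wdegM i B : wdeg M i B = wdeg W i B.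
Proof. by apply: eq_bigr => j _; rewrite /transf !normrM !sgn_norm mul1r mulr1. Qed.

Lemma a_decomp x i : i \in Rs ->
  a x i = sgn (tau i) * h i
    + (wdeg M i [set j in Rs | x j == tau j] - wdeg M i [set j in Rs | x j != tau j])
    + \sum_(j in ~: Rs) sgn (tau i) * W i j * sgn (x j).
Proof.
move=> iR; rewrite /a /F mulrDr mulr_sumr -addrA; congr (_ + _).
rewrite (bigID (mem Rs)) /=; congr (_ + _); last first.
  apply: eq_big => [j|j _]; rewrite ?inE ?mulrA //.
rewrite (bigID (fun j => x j == tau j)) /= /wdeg -sumrN.
congr (_ + _).
  apply: eq_big => [j|j /andP[jR /eqP ->]]; first by rewrite !inE.
  by rewrite mulrA ger0_norm //; apply: Hu.
apply: eq_big => [j|j /andP[jR Hne]]; first by rewrite !inE.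
have -> : x j = ~~ tau j by move: Hne; case: (x j) (tau j) => [] [].
rewrite sgnN mulrA mulrN ger0_norm //; last by apply: Hu.
Qed.

Lemma S_bound x i :
  `|\sum_(j in ~: Rs) sgn (tau i) * W i j * sgn (x j)| <= wdeg W i (~: Rs).
Proof.
apply: le_trans (ler_norm_sum _ _ _) _.
by apply: ler_sum => j _; rewrite !normrM !sgn_norm mul1r mulr1.
Qed.

Hypothesis Hind : indecomposable Rs (transf tau W)
    (fun i => sgn (tau i) * h i - wdeg W i (~: Rs))
    (fun i => sgn (tau i) * h i + wdeg W i (~: Rs)).

Lemma final (x : {ffun V -> bool}) :
  (forall i, i \in Rs -> x i = tau i -> 0 <= a x i) ->
  (forall i, i \in Rs -> x i != tau i -> a x i < 0) ->
  (forall i, i \in Rs -> x i = tau i) \/ (forall i, i \in Rs -> x i = ~~ tau i).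
Proof.
move=> Hp Hm.
case: ([set j in Rs | x j == tau j] =P set0) => [E|NUp].
  right => i iR; case: (x i =P tau i) => [xi|]; last by case: (x i) (tau i) => [] [].
  by move/setP: E => /(_ i); rewrite !inE iR xi eqxx.
case: ([set j in Rs | x j != tau j] =P set0) => [E|NUm].
  left => i iR; apply/eqP; apply: contraT => xi.
  by move/setP: E => /(_ i); rewrite !inE iR xi.
have HU : [set j in Rs | x j == tau j] :|: [set j in Rs | x j != tau j] = Rs.
  by apply/setP => j; rewrite !inE; case: (j \in Rs); case: (x j == tau j).
have HD : [disjoint [set j in Rs | x j == tau j] & [set j in Rs | x j != tau j]].
  rewrite -setI_eq0; apply/eqP/setP => j; rewrite !inE.
  by case: (j \in Rs); case: (x j == tau j).
have [i [[iUp Hi]|[iUm Hi]]] := Hind.2 _ _ HU HD (introN eqP NUp) (introN eqP NUm).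
- move: iUp; rewrite inE => /andP[iR /eqP xi].
  have := Hp i iR xi; rewrite (a_decomp x iR).
  have := S_bound x i; rewrite ler_norml => /andP[H1 H2].
  move: Hi; lra.
- move: iUm; rewrite inE => /andP[iR xi].
  have := Hm i iR xi; rewrite (a_decomp x iR).
  have := S_bound x i; rewrite ler_norml => /andP[H1 H2].
  move: Hi; lra.
Qed.

Lemma phase1 (x : {ffun V -> bool}) : exists x', BRpath (snc_u W h) x x' /\
  (forall i, i \notin Rs -> x' i = x i) /\
  (forall i, i \in Rs -> x' i = tau i -> 0 < a x' i).
Proof.
have [n] := ubnP #|[set j in Rs | x j == tau j]|; elim: n x => // n IH x Hn.
case: (boolP [exists i, [&& i \in Rs, x i == tau i & a x i <= 0]]) =>
    [/existsP[i /and3P[iR /eqP xi ai]] | /existsPn Hno]; last first.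
  exists x; split; first exact: BRpath_refl.
  split=> // i iR xi; move: (Hno i); rewrite iR xi eqxx /= -ltNge; exact.
set x1 := upd x i (~~ x i).
have Hs : BRstep (snc_u W h) x x1.
  apply/existsP; exists i; rewrite eqxx andbT is_BR_F xi sgnN mulNr oppr_ge0.
  exact: ai.
have Hc : (#|[set j in Rs | x1 j == tau j]| < n)%N.
  suff Hlt : (#|[set j in Rs | x1 j == tau j]| < #|[set j in Rs | x j == tau j]|)%N.
    by apply: leq_trans Hlt _; rewrite -ltnS.
  apply: proper_card; apply/properP; split.
    apply/subsetP => j; rewrite !inE ffunE; case: (j =P i) => [->|//].
    by rewrite xi; case: (tau i); rewrite ?andbF.
  exists i; first by rewrite inE iR xi eqxx.
  rewrite !inE ffunE eqxx xi iR /=; by case: (tau i).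
have [x' [Hp [HS Hpos]]] := IH x1 Hc.
exists x'; split; first exact: BRpath_cons Hs Hp.
split=> // k kR; rewrite HS // ffunE; case: eqP => // ki.
by rewrite ki iR in kR.
Qed.

Lemma phase2 (x : {ffun V -> bool}) : (forall i, i \in Rs -> x i = tau i -> 0 <= a x i) ->
  exists x', BRpath (snc_u W h) x x' /\
  (forall i, i \notin Rs -> x' i = x i) /\
  (forall i, i \in Rs -> x' i = tau i -> 0 <= a x' i) /\
  (forall i, i \in Rs -> x' i != tau i -> a x' i < 0).
Proof.
have [n] := ubnP #|[set j in Rs | x j != tau j]|; elim: n x => // n IH x Hn Hpx.
case: (boolP [exists i, [&& i \in Rs, x i != tau i & 0 <= a x i]]) =>
    [/existsP[i /and3P[iR xi ai]] | /existsPn Hno]; last first.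
  exists x; split; first exact: BRpath_refl.
  split=> //; split=> // i iR xi; move: (Hno i); rewrite iR xi /= -ltNge; exact.
have xi' : ~~ x i = tau i by move: xi; case: (x i) (tau i) => [] [].
set x1 := upd x i (~~ x i).
have Hs : BRstep (snc_u W h) x x1.
  by apply/existsP; exists i; rewrite eqxx andbT is_BR_F xi'.
have Hc : (#|[set j in Rs | x1 j != tau j]| < n)%N.
  suff Hlt : (#|[set j in Rs | x1 j != tau j]| < #|[set j in Rs | x j != tau j]|)%N.
    by apply: leq_trans Hlt _; rewrite -ltnS.
  apply: proper_card; apply/properP; split.
    apply/subsetP => j; rewrite !inE ffunE; case: (j =P i) => [->|//].
    by rewrite xi' eqxx /= andbF.
  exists i; first by rewrite inE iR xi.
  by rewrite !inE ffunE eqxx xi' eqxx /= andbF.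
have Hp1 : forall k, k \in Rs -> x1 k = tau k -> 0 <= a x1 k.
  move=> k kR; rewrite ffunE; case: eqP => [->|ki xk].
    by rewrite /a F_upd_self.
  have xi2 : x i = ~~ tau i by rewrite -xi' negbK.
  have Hk := Hpx k kR xk; have Hm := Hu kR iR.
  rewrite /a F_upd xi' xi2 sgnN.
  have -> : sgn (tau k) * (F x k + W k i * (sgn (tau i) - - sgn (tau i))) =
    a x k + 2 * transf tau W k i by rewrite /a /transf; ring.
  by apply: addr_ge0 => //; apply: mulr_ge0.
have [x' [Hp [HS [Hpos Hneg]]]] := IH x1 Hc Hp1.
exists x'; split; first exact: BRpath_cons Hs Hp.
split=> //; move=> k kR; rewrite HS // ffunE; case: eqP => // ki.
by rewrite ki iR in kR.
Qed.

Lemma reach_R (x : {ffun V -> bool}) : exists x', BRpath (snc_u W h) x x' /\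
  ((forall i, i \in Rs -> x' i = tau i) \/ (forall i, i \in Rs -> x' i = ~~ tau i)).
Proof.
have [x1 [P1 [_ H1]]] := phase1 x.
have [x2 [P2 [_ [H2 H3]]]] := phase2 (fun i iR xi => ltW (H1 i iR xi)).
exists x2; split; first exact: BRpath_trans P1 P2.
exact: final.
Qed.

Hypothesis Hw : forall i, i \in Rs -> wdeg W i Rs - `|h i| > wdeg W i (~: Rs).

Lemma strict (x : {ffun V -> bool}) :
  ((forall i, i \in Rs -> x i = tau i) \/ (forall i, i \in Rs -> x i = ~~ tau i)) ->
  forall i, i \in Rs -> ~~ is_BR (snc_u W h) i x (~~ x i).
Proof.
move=> Hx i iR; rewrite is_BR_F -ltNge.
have Hh : `|sgn (tau i) * h i| <= `|h i| by rewrite normrM sgn_norm mul1r.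
move: Hh; rewrite ler_norml => /andP[Hh1 Hh2].
have := S_bound x i; rewrite ler_norml => /andP[H1 H2].
have := Hw iR.
have wdeg0 : forall M : V -> V -> R, wdeg M i set0 = 0 by move=> ?; rewrite /wdeg big_set0.
case: Hx => Hx.
  have E1 : [set j in Rs | x j == tau j] = Rs.
    by apply/setP => j; rewrite inE; case: (boolP (j \in Rs)) => // jR; rewrite Hx // eqxx.
  have E2 : [set j in Rs | x j != tau j] = set0.
    by apply/setP => j; rewrite !inE; case: (boolP (j \in Rs)) => // jR; rewrite Hx // eqxx.
  have := a_decomp x iR; rewrite E1 E2 wdeg0 wdegM /a.
  rewrite Hx // sgnN mulNr; lra.
have E1 : [set j in Rs | x j == tau j] = set0.
  apply/setP => j; rewrite !inE; case: (boolP (j \in Rs)) => // jR; rewrite Hx //.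
  by case: (tau j).
have E2 : [set j in Rs | x j != tau j] = Rs.
  apply/setP => j; rewrite inE; case: (boolP (j \in Rs)) => // jR; rewrite Hx //.
  by case: (tau j).
have := a_decomp x iR; rewrite E1 E2 wdeg0 wdegM /a.
rewrite Hx // negbK; lra.
Qed.

Definition proj (x : {ffun V -> bool}) : {ffun Spl Rs -> bool} := [ffun j => x (val j)].

Lemma combine_val (y : {ffun V -> bool}) (z : {ffun Spl Rs -> bool}) (j : Spl Rs) : combine y z (val j) = z j.
Proof. by rewrite ffunE valK. Qed.

Lemma combine_R (y : {ffun V -> bool}) (z : {ffun Spl Rs -> bool}) i : i \in Rs -> combine y z i = y i.
Proof. by move=> iR; rewrite ffunE insubN // inE iR. Qed.

Lemma combineE (x y : {ffun V -> bool}) :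
  (forall i, i \in Rs -> x i = y i) -> x = combine y (proj x).
Proof.
move=> H; apply/ffunP => i; rewrite ffunE; case: insubP => [j _ <-|]; first by rewrite ffunE.
by rewrite inE negbK => /H.
Qed.

Lemma combine_upd (y : {ffun V -> bool}) (z : {ffun Spl Rs -> bool}) j b :
  combine y (upd z j b) = upd (combine y z) (val j) b.
Proof.
apply/ffunP => i; rewrite !ffunE; case: insubP => [k _ <-|Hn].
  by rewrite ffunE (inj_eq val_inj).
case: (i =P val j) => [E|//]; by move: Hn; rewrite E (valP j).
Qed.

Lemma is_BR_restr (y : {ffun V -> bool}) j (z : {ffun Spl Rs -> bool}) b :
  is_BR (restr_u W h Rs y) j z b = is_BR (snc_u W h) (val j) (combine y z) b.
Proof. by apply: eq_forallb => b'; rewrite /restr_u !combine_upd. Qed.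

Definition goodY (y : {ffun V -> bool}) := y = tau \/ y = [ffun i => ~~ tau i].

Lemma goodY_R (y : {ffun V -> bool}) (z : {ffun Spl Rs -> bool}) : goodY y ->
  (forall i, i \in Rs -> combine y z i = tau i) \/
  (forall i, i \in Rs -> combine y z i = ~~ tau i).
Proof.
by case=> -> ; [left|right] => i iR; rewrite combine_R // ?ffunE.
Qed.

Lemma strictY (y : {ffun V -> bool}) (z : {ffun Spl Rs -> bool}) i : goodY y -> i \in Rs ->
  ~~ is_BR (snc_u W h) i (combine y z) (~~ combine y z i).
Proof. by move=> gy; apply: strict; apply: goodY_R. Qed.

Lemma step_fw (y : {ffun V -> bool}) (z : {ffun Spl Rs -> bool}) z' : BRstep (restr_u W h Rs y) z z' ->
  BRstep (snc_u W h) (combine y z) (combine y z').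
Proof.
move=> /existsP[j /andP[Hb /eqP ->]]; apply/existsP; exists (val j).
by rewrite !combine_val -is_BR_restr Hb combine_upd eqxx.
Qed.

Lemma path_fw (y : {ffun V -> bool}) (z : {ffun Spl Rs -> bool}) z' : BRpath (restr_u W h Rs y) z z' ->
  BRpath (snc_u W h) (combine y z) (combine y z').
Proof.
move=> [s [Hp <-]]; exists (map (combine y) s); rewrite last_map; split=> //.
elim: s z Hp => //= z1 s IH z /andP[H1 H2]; rewrite step_fw //=; exact: IH.
Qed.

Lemma step_bw (y : {ffun V -> bool}) (z : {ffun Spl Rs -> bool}) x' : goodY y -> BRstep (snc_u W h) (combine y z) x' ->
  exists z', BRstep (restr_u W h Rs y) z z' /\ x' = combine y z'.
Proof.
move=> gy /existsP[i /andP[Hb /eqP ->]].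
have iS : i \in ~: Rs.
  rewrite inE; apply/negP => iR; by move: (strictY z gy iR); rewrite Hb.
pose j : Spl Rs := exist _ i iS.
exists (upd z j (~~ z j)); split; last by rewrite combine_upd -(combine_val y z j).
apply/existsP; exists j; rewrite eqxx andbT is_BR_restr.
by rewrite -(combine_val y z j).
Qed.

Lemma path_bw (y : {ffun V -> bool}) (z : {ffun Spl Rs -> bool}) x' : goodY y -> BRpath (snc_u W h) (combine y z) x' ->
  exists z', BRpath (restr_u W h Rs y) z z' /\ x' = combine y z'.
Proof.
move=> gy [s [Hp <-]]; elim: s z Hp => [|x1 s IH] z /=.
  by move=> _; exists z; split=> //; apply: BRpath_refl.
move=> /andP[H1 H2]; have [z1 [S1 E1]] := step_bw gy H1.
rewrite E1 in H2 *; have [z' [P' E']] := IH z1 H2.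
by exists z'; split=> //; apply: BRpath_cons S1 P'.
Qed.

Lemma Nash_iff (y : {ffun V -> bool}) (z : {ffun Spl Rs -> bool}) : goodY y ->
  Nash (restr_u W h Rs y) z <-> Nash (snc_u W h) (combine y z).
Proof.
move=> gy; split=> H i.
  case: (boolP (i \in Rs)) => iR.
    have := strictY z gy iR; rewrite !is_BR_F -ltNge sgnN mulNr oppr_lt0.
    exact: ltW.
  have iS : i \in ~: Rs by rewrite inE.
  have := H (exist _ i iS); rewrite is_BR_restr.
  by rewrite -[in X in is_BR _ _ _ X -> _](combine_val y z (exist _ i iS)).
by rewrite is_BR_restr -(combine_val y z i); apply: H.
Qed.
End S.

Theorem theorem2 (R : realFieldType) (V : finType) (W : V -> V -> R)
  (h : V -> R) (Rs : {set V}) (tau : {ffun V -> bool}) :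
  network W ->
  struct_balanced Rs W ->
  unsigned_on Rs (transf tau W) ->
  indecomposable Rs (transf tau W)
    (fun i => sgn (tau i) * h i - wdeg W i (~: Rs))
    (fun i => sgn (tau i) * h i + wdeg W i (~: Rs)) ->
  (forall i, i \in Rs -> wdeg W i Rs - `|h i| > wdeg W i (~: Rs)) ->
  ((forall y : {ffun V -> bool}, y = tau \/ y = [ffun i => ~~ tau i] ->
      BR_reachable (restr_u W h Rs y) (Nash (restr_u W h Rs y))) ->
    BR_reachable (snc_u W h) (Nbar W h Rs tau))
  /\
  ((forall y : {ffun V -> bool}, y = tau \/ y = [ffun i => ~~ tau i] ->
      exists A : {ffun Spl Rs -> bool} -> Prop,
        (exists z, A z) /\
        (forall z, A z -> Nash (restr_u W h Rs y) z) /\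
        BR_stable (restr_u W h Rs y) A) ->
    exists A : {ffun V -> bool} -> Prop,
      (forall x, A x -> Nbar W h Rs tau x) /\ BR_stable (snc_u W h) A).
Proof.
move=> [_ W0] _ Hu Hind Hw.
have reach : forall x : {ffun V -> bool}, exists y (z : {ffun Spl Rs -> bool}), goodY tau y /\ BRpath (snc_u W h) x (combine y z).
  move=> x; have [x' [P [Hx|Hx]]] := reach_R W0 Hu Hind x.
    exists tau, (proj Rs x'); split; first by left.
    by rewrite -(combineE Hx).
  exists [ffun i => ~~ tau i], (proj Rs x'); split; first by right.
  have E : x' = combine [ffun i => ~~ tau i] (proj Rs x').
    by apply: combineE => i iR; rewrite ffunE Hx.
  by rewrite -E.
have NbarE : forall y (z : {ffun Spl Rs -> bool}), goodY tau y ->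
    Nash (restr_u W h Rs y) z -> Nbar W h Rs tau (combine y z).
  move=> y z gy Nz; split; first by apply/(Nash_iff W0 Hu Hw z gy).
  by have := goodY_R z gy.
split.
  move=> Hr x; have [y [z [gy P1]]] := reach x.
  have [z' [Nz' P2]] := Hr y gy z.
  exists (combine y z'); split; first exact: NbarE.
  exact: BRpath_trans P1 (path_fw P2).
move=> Hs.
pose A (x : {ffun V -> bool}) := exists y, goodY tau y /\
  exists (z : {ffun Spl Rs -> bool}) (B : {ffun Spl Rs -> bool} -> Prop),
   [/\ forall z, B z -> Nash (restr_u W h Rs y) z, BR_stable (restr_u W h Rs y) B,
     B z & x = combine y z].
exists A; split; last split.
- move=> x [y [gy [z [B [HN _ Bz ->]]]]]; exact: NbarE (HN _ Bz).
- move=> x; have [y [z [gy P1]]] := reach x.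
  have [B [_ [HN [Hre Hinv]]]] := Hs y gy.
  have [z' [Bz' P2]] := Hre z.
  exists (combine y z'); split; last exact: BRpath_trans P1 (path_fw P2).
  by exists y; split=> //; exists z', B.
- move=> x x' [y [gy [z [B [HN [Hre Hinv] Bz ->]]]]] P.
  have [z' [P' ->]] := path_bw W0 Hu Hw gy P.
  exists y; split=> //; exists z', B; split=> //.
  exact: Hinv P'.
Qed.
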